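(* Let $T$ be a complete theory and let $\varphi(\overline{x})$ be a $T$-formula having only finitely many solutions (in a model of $T$). Then $\varphi(\overline{x})$ is binarizable.
   Context: An expansion of a complete theory $T$ is a complete theory $T'$ in a language containing that of $T$ with $T\subseteq T'$. A $T$-formula $\varphi(\overline{x})$ is $n$-aritizable if $T$ has an expansion $T'$ such that $\varphi(\overline{x})$ is $T'$-equivalent to a Boolean combination of $T'$-formulas with $n$ free variables. Binarizable means $2$-aritizable. *)

(* Defs.v *)
From Stdlib Require Import List Arith Fin.
Import ListNotations.

Record language : Type := Language {
  Func : Type;
  Rel : Type;
  farity : Func -> nat;
  rarity : Rel -> nat
}.

Inductive term (L : language) : Type :=
| var : nat -> term L
| app : forall f : Func L, (Fin.t (farity L f) -> term L) -> term L.
Arguments var {L} _.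
Arguments app {L} _ _.

(* First-order formulas with equality; variable 0 is bound by Ex/All. *)
Inductive formula (L : language) : Type :=
| Fal : formula L
| Tru : formula L
| Equ : term L -> term L -> formula L
| Atom : forall r : Rel L, (Fin.t (rarity L r) -> term L) -> formula L
| Not : formula L -> formula L
| And : formula L -> formula L -> formula L
| Or : formula L -> formula L -> formula L
| Imp : formula L -> formula L -> formula L
| Ex : formula L -> formula L
| All : formula L -> formula L.
Arguments Fal {L}. Arguments Tru {L}. Arguments Equ {L} _ _.
Arguments Atom {L} _ _. Arguments Not {L} _. Arguments And {L} _ _.
Arguments Or {L} _ _. Arguments Imp {L} _ _. Arguments Ex {L} _.
Arguments All {L} _.

Definition shiftP (P : nat -> Prop) (k : nat) : Prop :=
  match k with 0 => True | S j => P j end.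

Fixpoint term_fv_in {L} (P : nat -> Prop) (t : term L) : Prop :=
  match t with
  | var n => P n
  | app f args => forall i, term_fv_in P (args i)
  end.

Fixpoint fv_in {L} (P : nat -> Prop) (phi : formula L) : Prop :=
  match phi with
  | Fal | Tru => True
  | Equ t1 t2 => term_fv_in P t1 /\ term_fv_in P t2
  | Atom r args => forall i, term_fv_in P (args i)
  | Not a => fv_in P a
  | And a b | Or a b | Imp a b => fv_in P a /\ fv_in P b
  | Ex a | All a => fv_in (shiftP P) a
  end.

Definition sentence {L} (phi : formula L) : Prop := fv_in (fun _ => False) phi.

(* Structures (nonempty domains). *)
Record structure (L : language) : Type := Structure {
  dom : Type;
  point : dom;
  finterp : forall f : Func L, (Fin.t (farity L f) -> dom) -> dom;
  rinterp : forall r : Rel L, (Fin.t (rarity L r) -> dom) -> Prop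
}.
Arguments dom {L} _. Arguments finterp {L} _ _ _. Arguments rinterp {L} _ _ _.

Definition scons {A} (a : A) (e : nat -> A) (k : nat) : A :=
  match k with 0 => a | S j => e j end.

Fixpoint eval {L} (M : structure L) (e : nat -> dom M) (t : term L) : dom M :=
  match t with
  | var n => e n
  | app f args => finterp M f (fun i => eval M e (args i))
  end.

Fixpoint sat {L} (M : structure L) (e : nat -> dom M) (phi : formula L) : Prop :=
  match phi with
  | Fal => False
  | Tru => True
  | Equ t1 t2 => eval M e t1 = eval M e t2
  | Atom r args => rinterp M r (fun i => eval M e (args i))
  | Not a => ~ sat M e a
  | And a b => sat M e a /\ sat M e b
  | Or a b => sat M e a \/ sat M e b
  | Imp a b => sat M e a -> sat M e b
  | Ex a => exists x, sat M (scons x e) a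
  | All a => forall x, sat M (scons x e) a
  end.

(* Theories: sets of formulas (required to be sentences for completeness). *)
Definition theory (L : language) := formula L -> Prop.

Definition is_model {L} (M : structure L) (T : theory L) : Prop :=
  forall s, T s -> forall e, sat M e s.

Definition entails {L} (T : theory L) (phi : formula L) : Prop :=
  forall M : structure L, is_model M T -> forall e, sat M e phi.

Definition complete {L} (T : theory L) : Prop :=
  (forall s, T s -> sentence s) /\
  (exists M : structure L, is_model M T) /\
  (forall s, sentence s -> entails T s \/ entails T (Not s)).

(* The language L enlarged by the new symbols of E (every expansion of the
   language is, up to renaming of symbols, of this form). *)
Definition ext (L E : language) : language :=
  Language (Func L + Func E) (Rel L + Rel E)
    (fun s => match s with inl f => farity L f | inr g => farity E g end)
    (fun s => match s with inl r => rarity L r | inr q => rarity E q end).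

Fixpoint tlift {L E} (t : term L) : term (ext L E) :=
  match t with
  | var n => var n
  | app f args => @app (ext L E) (inl f) (fun i => tlift (args i))
  end.

Fixpoint flift {L E} (phi : formula L) : formula (ext L E) :=
  match phi with
  | Fal => Fal
  | Tru => Tru
  | Equ t1 t2 => Equ (tlift t1) (tlift t2)
  | Atom r args => @Atom (ext L E) (inl r) (fun i => tlift (args i))
  | Not a => Not (flift a)
  | And a b => And (flift a) (flift b)
  | Or a b => Or (flift a) (flift b)
  | Imp a b => Imp (flift a) (flift b)
  | Ex a => Ex (flift a)
  | All a => All (flift a)
  end.

Inductive bool_comb {L} (A : formula L -> Prop) : formula L -> Prop :=
| bc_atom : forall phi, A phi -> bool_comb A phi
| bc_fal : bool_comb A Fal
| bc_tru : bool_comb A Tru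
| bc_not : forall a, bool_comb A a -> bool_comb A (Not a)
| bc_and : forall a b, bool_comb A a -> bool_comb A b -> bool_comb A (And a b)
| bc_or : forall a b, bool_comb A a -> bool_comb A b -> bool_comb A (Or a b)
| bc_imp : forall a b, bool_comb A a -> bool_comb A b -> bool_comb A (Imp a b).

(* Formulas with (at most) n free variables. *)
Definition has_n_free_vars {L} (n : nat) (th : formula L) : Prop :=
  exists l : list nat, length l <= n /\ fv_in (fun k => In k l) th.

Definition equiv_in {L} (T : theory L) (phi psi : formula L) : Prop :=
  forall M : structure L, is_model M T -> forall e, sat M e phi <-> sat M e psi.

Definition aritizable {L} (n : nat) (T : theory L) (phi : formula L) : Prop :=
  exists (E : language) (T' : theory (ext L E)) (psi : formula (ext L E)),
    complete T' /\
    (forall s, T s -> T' (flift s)) /\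
    bool_comb (has_n_free_vars n) psi /\
    equiv_in T' (flift phi) psi.

Definition binarizable {L} (T : theory L) (phi : formula L) : Prop :=
  aritizable 2 T phi.

(* Main.v *)
Require Import Defs.
From Stdlib Require Import List Arith Lia Classical FunctionalExtensionality.
Import ListNotations.

Lemma fv_term_mono {L} (P Q : nat -> Prop) (t : term L) :
  (forall k, P k -> Q k) -> term_fv_in P t -> term_fv_in Q t.
Proof.
  intros H; induction t as [n|f args IH]; simpl; auto.
Qed.

Lemma fv_mono {L} (phi : formula L) : forall (P Q : nat -> Prop),
  (forall k, P k -> Q k) -> fv_in P phi -> fv_in Q phi.
Proof.
  induction phi; intros P Q H Hf; simpl in *; auto;
  try (destruct Hf; split; eauto using fv_term_mono; fail);
  try (intro i; eauto using fv_term_mono; fail);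
  try (eapply IHphi; [|exact Hf]; intros [|k]; simpl; auto).
Qed.

Lemma eval_coinc {L} (M : structure L) P (e1 e2 : nat -> dom M) t :
  term_fv_in P t -> (forall k, P k -> e1 k = e2 k) -> eval M e1 t = eval M e2 t.
Proof.
  intros Ht He; induction t as [n|f args IH]; simpl in *; auto.
  f_equal. apply functional_extensionality; intro i; auto.
Qed.

Lemma scons_agree {A} (P : nat -> Prop) (x : A) e1 e2 :
  (forall k, P k -> e1 k = e2 k) ->
  forall k, shiftP P k -> scons x e1 k = scons x e2 k.
Proof. intros H [|k]; simpl; auto. Qed.

Lemma sat_coinc {L} (M : structure L) phi : forall P (e1 e2 : nat -> dom M),
  fv_in P phi -> (forall k, P k -> e1 k = e2 k) -> (sat M e1 phi <-> sat M e2 phi).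
Proof.
  induction phi; intros P e1 e2 Hf He; simpl in *.
  - tauto.
  - tauto.
  - destruct Hf as [H1 H2].
    rewrite (eval_coinc M P e1 e2 t H1 He), (eval_coinc M P e1 e2 t0 H2 He); tauto.
  - replace (fun i => eval M e1 (t i)) with (fun i => eval M e2 (t i)). tauto.
    apply functional_extensionality; intro i; symmetry; eapply eval_coinc; eauto.
  - rewrite (IHphi P e1 e2 Hf He); tauto.
  - destruct Hf; rewrite (IHphi1 P e1 e2), (IHphi2 P e1 e2) by assumption; tauto.
  - destruct Hf; rewrite (IHphi1 P e1 e2), (IHphi2 P e1 e2) by assumption; tauto.
  - destruct Hf; rewrite (IHphi1 P e1 e2), (IHphi2 P e1 e2) by assumption; tauto.
  - split; intros [x Hx]; exists x;
      pose proof (IHphi (shiftP P) (scons x e1) (scons x e2) Hf (scons_agree P x e1 e2 He)); tauto.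
  - split; intros Hx x; specialize (Hx x);
      pose proof (IHphi (shiftP P) (scons x e1) (scons x e2) Hf (scons_agree P x e1 e2 He)); tauto.
Qed.

Definition EL {L} (M : structure L) : language :=
  Language Empty_set (dom M) (fun f => match f with end) (fun _ => 1).

Definition Mx {L} (M : structure L) : structure (ext L (EL M)) :=
  Structure (ext L (EL M)) (dom M) (point L M)
   (fun s => match s return (Fin.t (farity (ext L (EL M)) s) -> dom M) -> dom M with
             | inl f => fun args => finterp M f args
             | inr g => match g with end end)
   (fun s => match s return (Fin.t (rarity (ext L (EL M)) s) -> dom M) -> Prop with
             | inl r => fun args => rinterp M r args
             | inr a => fun args => args Fin.F1 = a end).

Lemma eval_lift {L} (M : structure L) e (t : term L) :
  eval (Mx M) e (tlift t) = eval M e t.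
Proof.
  induction t as [n|f args IH]; simpl; auto.
  f_equal. apply functional_extensionality; intro i; auto.
Qed.

Lemma sat_lift {L} (M : structure L) (phi : formula L) : forall e,
  sat (Mx M) e (flift phi) <-> sat M e phi.
Proof.
  induction phi; intros e; simpl; try tauto.
  - rewrite !eval_lift; tauto.
  - replace (fun i => eval (Mx M) e (tlift (t i))) with (fun i => eval M e (t i)). tauto.
    apply functional_extensionality; intro i; symmetry; apply eval_lift.
  - rewrite IHphi; tauto.
  - rewrite IHphi1, IHphi2; tauto.
  - rewrite IHphi1, IHphi2; tauto.
  - rewrite IHphi1, IHphi2; tauto.
  - split; intros [x Hx]; exists x; apply IHphi; auto.
  - split; intros Hx x; apply IHphi; auto.
Qed.

Lemma fv_tlift {L E} P (t : term L) : term_fv_in P t -> term_fv_in P (@tlift L E t).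
Proof. induction t as [n|f args IH]; simpl; auto. Qed.

Lemma fv_flift {L E} (phi : formula L) : forall P, fv_in P phi -> fv_in P (@flift L E phi).
Proof.
  induction phi; intros P Hf; simpl in *; auto;
  try (destruct Hf; split; auto using fv_tlift; fail).
  intro i; apply fv_tlift; auto.
Qed.

Definition atomx {L} (M : structure L) (i : nat) (a : dom M) : formula (ext L (EL M)) :=
  @Atom (ext L (EL M)) (inr a) (fun _ => var i).

Fixpoint conjx {L} (M : structure L) (k : nat) (f : nat -> dom M) : formula (ext L (EL M)) :=
  match k with 0 => Tru | S k => And (conjx M k f) (atomx M k (f k)) end.

Definition disjx {L} (M : structure L) n (l : list (nat -> dom M)) : formula (ext L (EL M)) :=
  fold_right (fun f acc => Or (conjx M n f) acc) Fal l.

Lemma sat_conjx {L} (M : structure L) f e k :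
  sat (Mx M) e (conjx M k f) <-> forall i, i < k -> e i = f i.
Proof.
  induction k; simpl.
  - split; auto; intros; lia.
  - rewrite IHk. split.
    + intros [H1 H2] i Hi. destruct (Nat.eq_dec i k); [subst; exact H2|apply H1; lia].
    + intros H; split; [intros; apply H; lia| apply H; lia].
Qed.

Lemma sat_disjx {L} (M : structure L) n l e :
  sat (Mx M) e (disjx M n l) <-> exists f, In f l /\ forall i, i < n -> e i = f i.
Proof.
  induction l as [|f l IH]; simpl.
  - split; [tauto|intros [f [[] _]]].
  - rewrite IH, sat_conjx. split.
    + intros [H|[g [Hg H]]]; [exists f|exists g]; auto.
    + intros [g [[<-|Hg] H]]; [left|right; exists g]; auto.
Qed.

Lemma fv_disjx {L} (M : structure L) n l : fv_in (fun j => j < n) (disjx M n l).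
Proof.
  induction l as [|f l IH]; simpl; auto. split; auto.
  assert (forall k, k <= n -> fv_in (fun j => j < n) (conjx M k f)) by
    (induction k; simpl; auto; intros; split; [apply IHk; lia| intros _; simpl; lia]).
  auto.
Qed.

Lemma bc_disjx {L} (M : structure L) n l : bool_comb (has_n_free_vars 2) (disjx M n l).
Proof.
  induction l as [|f l IH]; simpl; [apply bc_fal|apply bc_or; auto].
  clear IH. induction n; simpl; [apply bc_tru|apply bc_and; auto].
  apply bc_atom. exists [n]; simpl; split; [lia|auto].
Qed.

Fixpoint allN {L} k (b : formula L) := match k with 0 => b | S k => All (allN k b) end.

Fixpoint app_env {A} k (f e : nat -> A) : nat -> A :=
  match k with 0 => e | S k => app_env k f (scons (f k) e) end.

Lemma app_env_hi {A} k (f : nat -> A) : forall e m, app_env k f e (k + m) = e m.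
Proof.
  induction k; intros e m; simpl; auto.
  replace (S (k + m)) with (k + S m) by lia. rewrite IHk; reflexivity.
Qed.

Lemma app_env_lo {A} k (f : nat -> A) : forall e j, j < k -> app_env k f e j = f j.
Proof.
  induction k; intros e j Hj; simpl; [lia|].
  destruct (Nat.eq_dec j k).
  - subst. pose proof (app_env_hi k f (scons (f k) e) 0) as H.
    rewrite Nat.add_0_r in H; rewrite H; reflexivity.
  - apply IHk; lia.
Qed.

Lemma sat_allN {L} (M : structure L) k b : forall e,
  sat M e (allN k b) -> forall f, sat M (app_env k f e) b.
Proof.
  induction k; intros e H f; simpl in *; auto.
Qed.

Lemma sat_allN_intro {L} (M : structure L) k b :
  (forall e, sat M e b) -> forall e, sat M e (allN k b).
Proof. induction k; intros H e; simpl; auto. Qed.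

Lemma fv_allN {L} k (b : formula L) : forall P,
  fv_in (fun j => j < k \/ P (j - k)) b -> fv_in P (allN k b).
Proof.
  induction k; intros P H; simpl.
  - eapply fv_mono; [|exact H]. intros j [Hj|Hj]; [lia|]. rewrite Nat.sub_0_r in Hj; auto.
  - apply IHk. eapply fv_mono; [|exact H]. intros j [Hj|Hj].
    + destruct (Nat.eq_dec j k); [right; subst; rewrite Nat.sub_diag; simpl; auto|left; lia].
    + destruct (lt_dec j k); [left; lia|right].
      destruct (Nat.eq_dec j k); [subst; rewrite Nat.sub_diag; simpl; auto|].
      replace (j - k) with (S (j - S k)) by lia. exact Hj.
Qed.

Definition Iff {L} (a b : formula L) := And (Imp a b) (Imp b a).

Lemma good_list {L} (M : structure L) n (phi : formula L) (l : list (nat -> dom M)) :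
  fv_in (fun j => j < n) phi ->
  exists l', (forall f, In f l' -> sat M f phi) /\
    (forall e, sat M e phi -> (exists f, In f l /\ forall i, i < n -> e i = f i) ->
       exists f, In f l' /\ forall i, i < n -> e i = f i).
Proof.
  intros Hfv.
  induction l as [|g l IH].
  - exists []; split; [simpl; tauto|intros e _ [f [[] _]]].
  - destruct IH as [l' [H1 H2]].
    destruct (classic (sat M g phi)) as [Hg|Hg].
    + exists (g :: l'); split.
      * intros f [<-|Hf]; auto.
      * intros e He [f [[Heq|Hf] Ha]]; [subst; exists f; simpl; auto|].
        destruct (H2 e He (ex_intro _ f (conj Hf Ha))) as [f' [? ?]]; exists f'; simpl; auto.
    + exists l'; split; auto.
      intros e He [f [[Heq|Hf] Ha]].
      * subst. exfalso; apply Hg. 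
        exact (proj1 (sat_coinc M phi (fun j => j < n) e f Hfv Ha) He).
      * apply H2; eauto.
Qed.

Theorem proposition2p3 (L : language) (T : theory L) (n : nat)
  (phi : formula L) :
  complete T ->
  fv_in (fun k => k < n) phi ->
  (exists M : structure L, is_model M T /\
     exists sols : list (nat -> dom M),
       forall e, sat M e phi ->
         exists e', In e' sols /\ forall i, i < n -> e i = e' i) ->
  binarizable T phi.
Proof.
  intros [HTs [_ HTd]] Hfv [M [HM [sols Hsols]]].
  destruct (good_list M n phi sols Hfv) as [l' [Hl1 Hl2]].
  set (psi := disjx M n l').
  set (T' := fun s : formula (ext L (EL M)) => sentence s /\ forall e, sat (Mx M) e s).
  assert (Hsig : T' (allN n (Iff (flift phi) psi))).
  { split.
    - unfold sentence. apply fv_allN.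
      assert (fv_in (fun j => j < n) (Iff (flift phi) psi)).
      { pose proof (@fv_flift L (EL M) phi _ Hfv). pose proof (fv_disjx M n l').
        simpl; tauto. }
      eapply fv_mono; [|eassumption]. simpl; auto.
    - apply sat_allN_intro. intros e. simpl. rewrite sat_lift. unfold psi.
      rewrite sat_disjx. split.
      + intros He. apply Hl2; auto.
      + intros [f [Hf Ha]].
        apply (proj2 (sat_coinc M phi (fun j => j < n) e f Hfv Ha)); auto. }
  exists (EL M), T', psi. split; [|split; [|split]].
  - split; [intros s [Hs _]; exact Hs|split].
    + exists (Mx M). intros s [_ Hs]; exact Hs.
    + intros s Hs. destruct (classic (forall e, sat (Mx M) e s)) as [Hy|Hn].
      * left. intros N HN e. apply HN. split; auto.
      * right. intros N HN e. apply HN. split; [exact Hs|].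
        intros e' Hs'. apply Hn. intros e''.
        apply (proj1 (sat_coinc (Mx M) s (fun _ => False) e' e'' Hs (fun _ (f : False) => match f with end)) Hs').
  - intros s Hs. split.
    + apply fv_flift. apply HTs; auto.
    + intros e. apply sat_lift. apply HM; auto.
  - apply bc_disjx.
  - intros N HN e.
    pose proof (HN _ Hsig e) as H.
    pose proof (sat_allN N n _ e H e) as H'.
    assert (Hf : fv_in (fun j => j < n) (Iff (flift phi) psi)).
    { pose proof (@fv_flift L (EL M) phi _ Hfv). pose proof (fv_disjx M n l').
      simpl; tauto. }
    rewrite (sat_coinc N _ (fun j => j < n) (app_env n e e) e Hf) in H'.
    + simpl in H'; tauto.
    + intros k Hk; apply app_env_lo; auto.
Qed.
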